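(* Let $A_1A_2A_3$ be a gyrotriangle in the Einstein gyrovector space $\mathbb{R}^n_s$ that possesses a circumgyrocircle, with circumgyrocenter $O$ and circumgyroradius $R$, and let $\gamma_{ij}=\gamma_{\ominus A_i\oplus A_j}$, $\gamma_R=(1-R^2/s^2)^{-1/2}$. Let $A\in(A_1\oplus\mathrm{span}\{\ominus A_1\oplus A_2,\ominus A_1\oplus A_3\})\cap\mathbb{R}^n_s$ have gyrobarycentric representation $A=\frac{m_1\gamma_{A_1}A_1+m_2\gamma_{A_2}A_2+m_3\gamma_{A_3}A_3}{m_1\gamma_{A_1}+m_2\gamma_{A_2}+m_3\gamma_{A_3}}$, and let $d=\|\ominus A\oplus O\|$. Then $$d=\sqrt{1-\frac{2s^2K}{M^2\gamma_R^2R^2}}\;R,$$ where $K=m_1m_2(\gamma_{12}-1)+m_1m_3(\gamma_{13}-1)+m_2m_3(\gamma_{23}-1)$ and $M=m_1+m_2+m_3$.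
   Context: Fix $s>0$, $n\ge2$; $\mathbb{R}^n_s=\{v\in\mathbb{R}^n:\|v\|<s\}$ with Einstein addition $u\oplus v=\frac{1}{1+u\cdot v/s^2}\{u+\frac{1}{\gamma_u}v+\frac{1}{s^2}\frac{\gamma_u}{1+\gamma_u}(u\cdot v)u\}$, $\gamma_v=(1-\|v\|^2/s^2)^{-1/2}$, $\ominus v=-v$. A gyrotriangle $A_1A_2A_3$ has $\ominus A_1\oplus A_2,\ominus A_1\oplus A_3$ linearly independent. Its circumgyrocenter is the point $O$ of $(A_1\oplus\mathrm{span}\{\ominus A_1\oplus A_2,\ominus A_1\oplus A_3\})\cap\mathbb{R}^n_s$ equigyrodistant from the vertices; the circumgyroradius is $R=\|\ominus A_1\oplus O\|$; the circumgyrocircle is the set of points of that gyroplane at gyrodistance $R$ from $O$. *)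

(* Defs.v *)
From HB Require Import structures.
From mathcomp Require Import all_boot all_order all_algebra.
Set Implicit Arguments. Unset Strict Implicit. Unset Printing Implicit Defensive.
Import Order.TTheory GRing.Theory Num.Theory.
Local Open Scope ring_scope.

Section Einstein.
Variables (R : rcfType) (n : nat) (s : R).

Definition edot (u v : 'rV[R]_n) : R := \sum_(i < n) u 0 i * v 0 i.
Definition enorm (v : 'rV[R]_n) : R := Num.sqrt (edot v v).

Definition in_ball (v : 'rV[R]_n) : Prop := enorm v < s.

Definition egamma (v : 'rV[R]_n) : R := (Num.sqrt (1 - enorm v ^+ 2 / s ^+ 2))^-1.

Definition eadd (u v : 'rV[R]_n) : 'rV[R]_n :=
  (1 + edot u v / s ^+ 2)^-1 *:
    (u + (egamma u)^-1 *: v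
       + ((s ^+ 2)^-1 * (egamma u / (1 + egamma u)) * edot u v) *: u).

Definition eminus_add (u v : 'rV[R]_n) : 'rV[R]_n := eadd (- u) v.

Definition lin_indep2 (u v : 'rV[R]_n) : Prop :=
  forall a b : R, a *: u + b *: v = 0 -> a = 0 /\ b = 0.

Definition gyrotriangle (A1 A2 A3 : 'rV[R]_n) : Prop :=
  [/\ in_ball A1, in_ball A2, in_ball A3 &
      lin_indep2 (eminus_add A1 A2) (eminus_add A1 A3)].

Definition in_gyroplane (A1 A2 A3 X : 'rV[R]_n) : Prop :=
  in_ball X /\
  exists a b : R,
    X = eadd A1 (a *: eminus_add A1 A2 + b *: eminus_add A1 A3).

Definition circumgyrocenter (A1 A2 A3 O : 'rV[R]_n) : Prop :=
  [/\ in_gyroplane A1 A2 A3 O,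
      enorm (eminus_add A1 O) = enorm (eminus_add A2 O) &
      enorm (eminus_add A1 O) = enorm (eminus_add A3 O)].

End Einstein.

(* Main.v *)
Require Import Defs.
From HB Require Import structures.
From mathcomp Require Import all_boot all_order all_algebra.
From mathcomp Require Import ring lra.
Import Order.TTheory GRing.Theory Num.Theory.
Local Open Scope ring_scope.
Set Implicit Arguments. Unset Strict Implicit.
Set Warnings "-notation-overridden,-ambiguous-paths".

Section H.
Variables (R : rcfType) (n : nat) (s : R).
Implicit Types (u v w : 'rV[R]_n).

Lemma edotDl u v w : edot (u + v) w = edot u w + edot v w.
Proof. rewrite /edot -big_split; apply: eq_bigr => i _; rewrite mxE mulrDl. by []. Qed.
Lemma edotZl a u w : edot (a *: u) w = a * edot u w.
Proof. rewrite /edot mulr_sumr; apply: eq_bigr => i _; rewrite mxE mulrA. by []. Qed.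
Lemma edotC u v : edot u v = edot v u.
Proof. rewrite /edot; apply: eq_bigr => i _; by rewrite mulrC. Qed.
Lemma edotDr u v w : edot w (u + v) = edot w u + edot w v.
Proof. by rewrite edotC edotDl !(edotC w). Qed.
Lemma edotZr a u w : edot w (a *: u) = a * edot w u.
Proof. by rewrite edotC edotZl edotC. Qed.
Lemma edotNl u w : edot (- u) w = - edot u w.
Proof. by rewrite -scaleN1r edotZl mulN1r. Qed.
Lemma edotNr u w : edot w (- u) = - edot w u.
Proof. by rewrite edotC edotNl edotC. Qed.
Lemma edot_ge0 u : 0 <= edot u u.
Proof. apply: sumr_ge0 => i _; by rewrite -expr2 sqr_ge0. Qed.
Lemma edot_eq0 u : edot u u = 0 -> u = 0.
Proof.
move=> h; apply/rowP => i; rewrite !mxE.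
have := psumr_eq0P (fun j _ => (ltac:(by rewrite -expr2 sqr_ge0) : 0 <= u 0 j * u 0 j)) h (i := i) isT.
by move/eqP; rewrite mulf_eq0 orbb => /eqP.
Qed.
Lemma enorm2 u : enorm u ^+ 2 = edot u u.
Proof. by rewrite /enorm sqr_sqrtr // edot_ge0. Qed.
Lemma ball_dot u : 0 < s -> in_ball s u -> edot u u < s ^+ 2.
Proof.
move=> s0; rewrite /in_ball => h; rewrite -enorm2.
have : 0 <= enorm u by exact: sqrtr_ge0.
move=> h0; nra.
Qed.
End H.
Section H2.
Variables (R : rcfType) (n : nat) (s : R).
Implicit Types (u v w : 'rV[R]_n).

Lemma egammaN u : egamma s (- u) = egamma s u.
Proof. by rewrite /egamma !enorm2 edotNl edotNr opprK. Qed.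

Lemma eminus_form u v :
  let g := egamma s u in let k := (1 + - edot u v / s ^+ 2)^-1 in
  eminus_add s u v =
   (k * (-1 + (s ^+ 2)^-1 * (g / (1 + g)) * edot u v)) *: u + (k * g^-1) *: v.
Proof.
move=> g k; rewrite /eminus_add /eadd egammaN edotNl -/g -/k.
apply/rowP => i; rewrite !mxE. ring.
Qed.

Lemma dot_comb a b u v : edot (a *: u + b *: v) (a *: u + b *: v) =
  a ^+ 2 * edot u u + 2 * a * b * edot u v + b ^+ 2 * edot v v.
Proof. rewrite !(edotDl, edotDr, edotZl, edotZr) (edotC v u). ring. Qed.

Lemma gamma_sq u : 0 < s -> edot u u < s ^+ 2 ->
  0 < egamma s u /\ edot u u = s ^+ 2 * (1 - (egamma s u) ^-2).
Proof.
move=> s0 hu.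
have hq : 0 < 1 - edot u u / s ^+ 2.
  rewrite subr_gt0 ltr_pdivrMr ?exprn_gt0 // mul1r //.
rewrite /egamma enorm2; split; first by rewrite invr_gt0 sqrtr_gt0.
rewrite exprVn invrK sqr_sqrtr ?ltW //. field. by rewrite gt_eqF.
Qed.

Lemma dot_lt u v : 0 < s -> edot u u < s ^+ 2 -> edot v v < s ^+ 2 ->
  0 < 1 - edot u v / s ^+ 2.
Proof.
move=> s0 hu hv.
have := edot_ge0 (1 *: u + (-1) *: v); rewrite dot_comb => h.
have s20 : 0 < s ^+ 2 by rewrite exprn_gt0.
rewrite subr_gt0 ltr_pdivrMr // mul1r. nra.
Qed.

Lemma q_minus u v : 0 < s -> edot u u < s ^+ 2 -> edot v v < s ^+ 2 ->
  1 - edot (eminus_add s u v) (eminus_add s u v) / s ^+ 2 =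
  (1 - edot u u / s ^+ 2) * (1 - edot v v / s ^+ 2) / (1 - edot u v / s ^+ 2) ^+ 2.
Proof.
move=> s0 hu hv.
have ht := dot_lt s0 hu hv.
have [g0 hg] := gamma_sq s0 hu.
rewrite eminus_form dot_comb hg.
set g := egamma s u. set uv := edot u v. set vv := edot v v.
have h1 : 1 + g != 0 by rewrite gt_eqF // addr_gt0.
have h2 : 1 + - uv / s ^+ 2 != 0.
  by rewrite mulNr gt_eqF.
have h3 : 1 - uv / s ^+ 2 != 0 by rewrite gt_eqF.
have h4 : 0 < s ^+ 2 - uv.
  by move: ht; rewrite subr_gt0 ltr_pdivrMr ?exprn_gt0 // mul1r subr_gt0.
field. by rewrite h1 !gt_eqF.
Qed.

Lemma q_pos u : 0 < s -> edot u u < s ^+ 2 -> 0 < 1 - edot u u / s ^+ 2.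
Proof. move=> s0 hu. rewrite subr_gt0 ltr_pdivrMr ?exprn_gt0 // mul1r //. Qed.

Lemma sqrt_aux (a b t : R) : 0 < a -> 0 < b -> 0 < t ->
  (Num.sqrt (a * b / t ^+ 2))^-1 = (Num.sqrt a)^-1 * (Num.sqrt b)^-1 * t.
Proof.
move=> a0 b0 t0.
rewrite -exprVn sqrtrM ?mulr_ge0 ?ltW // sqrtrM ?ltW // sqrtr_sqr gtr0_norm ?invr_gt0 //.
by rewrite !invfM invrK.
Qed.

Lemma gamma_minus u v : 0 < s -> edot u u < s ^+ 2 -> edot v v < s ^+ 2 ->
  egamma s (eminus_add s u v) = egamma s u * egamma s v * (1 - edot u v / s ^+ 2).
Proof.
move=> s0 hu hv.
have ht := dot_lt s0 hu hv.
rewrite {1}/egamma enorm2 q_minus // sqrt_aux ?q_pos //.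
by rewrite /egamma !enorm2.
Qed.

Lemma eminus_eq0 u v : 0 < s -> edot u u < s ^+ 2 -> edot v v < s ^+ 2 ->
  enorm (eminus_add s u v) = 0 -> u = v.
Proof.
move=> s0 hu hv h.
have ht := dot_lt s0 hu hv.
have [g0 hg] := gamma_sq s0 hu.
have e0 : eminus_add s u v = 0 by apply: edot_eq0; rewrite -enorm2 h expr0n.
rewrite eminus_form in e0.
move: e0.
set g := egamma s u. set k := (1 + - edot u v / s ^+ 2)^-1.
set al := (-1 + (s ^+ 2)^-1 * (g / (1 + g)) * edot u v).
have h1 : 1 + g != 0 by rewrite gt_eqF // addr_gt0.
have h4 : 0 < s ^+ 2 - edot u v.
  by move: ht; rewrite subr_gt0 ltr_pdivrMr ?exprn_gt0 // mul1r subr_gt0.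
have k0 : k != 0.
  rewrite /k invr_eq0; apply/eqP => hk. suff h0 : 1 - edot u v / s ^+ 2 = 0 by move: ht; rewrite h0 ltxx. by rewrite -[RHS]hk; ring.
move=> e0.
have hv' : v = (- (al * g)) *: u.
  have : (k*g^-1)^-1 *: ((k * al) *: u + (k * g^-1) *: v) = 0 by rewrite e0 scaler0.
  rewrite scalerDr !scalerA mulVf; last by rewrite mulf_neq0 // invr_eq0 gt_eqF.
rewrite scale1r.
  move/eqP; rewrite addrC addr_eq0 => /eqP ->.
  rewrite -scaleNr; congr (_ *: _). field. by rewrite k0 andbT gt_eqF.
have huv : edot u v = - (al * g) * edot u u by rewrite {1}hv' edotZr.
have e1 : al * g = - g - al * g * (g - 1).
  rewrite {1}/al huv hg. rewrite -/g. clearbody al. field. by rewrite h1 !gt_eqF.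
have e2 : al*g*g + g = al*g - (-g - al*g*(g-1)) by ring.
have : (al * g + 1) * g = 0 by rewrite mulrDl mul1r e2 -e1 subrr.
move/eqP; rewrite mulf_eq0 (gt_eqF g0) orbF addr_eq0 => /eqP hy.
by rewrite hv' hy opprK scale1r.
Qed.
End H2.
Theorem mainTheorem12 (R : rcfType) (n : nat) (s : R)
  (A1 A2 A3 O A : 'rV[R]_n) (m1 m2 m3 : R) :
  (2 <= n)%N -> 0 < s ->
  gyrotriangle s A1 A2 A3 ->
  circumgyrocenter s A1 A2 A3 O ->
  in_gyroplane s A1 A2 A3 A ->
  m1 * egamma s A1 + m2 * egamma s A2 + m3 * egamma s A3 != 0 ->
  A = (m1 * egamma s A1 + m2 * egamma s A2 + m3 * egamma s A3)^-1 *: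
        ((m1 * egamma s A1) *: A1 + (m2 * egamma s A2) *: A2
           + (m3 * egamma s A3) *: A3) ->
  m1 + m2 + m3 != 0 ->
  let Rc := enorm (eminus_add s A1 O) in
  let gR := (Num.sqrt (1 - Rc ^+ 2 / s ^+ 2))^-1 in
  let g12 := egamma s (eminus_add s A1 A2) in
  let g13 := egamma s (eminus_add s A1 A3) in
  let g23 := egamma s (eminus_add s A2 A3) in
  let K := m1 * m2 * (g12 - 1) + m1 * m3 * (g13 - 1) + m2 * m3 * (g23 - 1) in
  let M := m1 + m2 + m3 in
  enorm (eminus_add s A O) =
    Num.sqrt (1 - 2 * s ^+ 2 * K / (M ^+ 2 * gR ^+ 2 * Rc ^+ 2)) * Rc.
Proof.
move=> _ s0 [b1 b2 b3 hli] [[bO _] hO2 hO3] [bA _] hD hAdef hM.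
move=> Rc gR g12 g13 g23 K M.
have d1 := ball_dot s0 b1. have d2 := ball_dot s0 b2. have d3 := ball_dot s0 b3.
have dO := ball_dot s0 bO. have dA := ball_dot s0 bA.
have Rc0 : Rc != 0.
  apply/eqP => h0.
  have e1 := eminus_eq0 s0 d1 dO h0.
  have e2 := eminus_eq0 s0 d2 dO (etrans (esym hO2) h0).
  have e3 := eminus_eq0 s0 d3 dO (etrans (esym hO3) h0).
  have := hli 1 (-1); rewrite e2 e3 scaleN1r scale1r subrr => /(_ erefl) [].
  by move/eqP; rewrite oner_eq0.
have hgR1 : gR = egamma s (eminus_add s A1 O) by [].
have hgR2 : gR = egamma s (eminus_add s A2 O) by rewrite hgR1 /egamma hO2.
have hgR3 : gR = egamma s (eminus_add s A3 O) by rewrite hgR1 /egamma hO3.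
rewrite gamma_minus // in hgR1. rewrite gamma_minus // in hgR2. rewrite gamma_minus // in hgR3.
have h12 : g12 = _ := gamma_minus s0 d1 d2.
have h13 : g13 = _ := gamma_minus s0 d1 d3.
have h23 : g23 = _ := gamma_minus s0 d2 d3.
have hdd := q_minus s0 dA dO.
have hrr := q_minus s0 d1 dO.
set g1 := egamma s A1 in hgR1 hgR2 hgR3 h12 h13 h23 hAdef hD *.
set g2 := egamma s A2 in hgR1 hgR2 hgR3 h12 h13 h23 hAdef hD *.
set g3 := egamma s A3 in hgR1 hgR2 hgR3 h12 h13 h23 hAdef hD *.
set gO := egamma s O in hgR1 hgR2 hgR3 *.
set D := m1 * g1 + m2 * g2 + m3 * g3 in hAdef hD *.
have [g10 a11] := gamma_sq s0 d1.
have [g20 a22] := gamma_sq s0 d2.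
have [g30 a33] := gamma_sq s0 d3.
have [gO0 aOO] := gamma_sq s0 dO.
have s0' : s != 0 by rewrite gt_eqF.
have g1' : g1 != 0 by rewrite gt_eqF.
have g2' : g2 != 0 by rewrite gt_eqF.
have g3' : g3 != 0 by rewrite gt_eqF.
have gO' : gO != 0 by rewrite gt_eqF.
have a1O : edot A1 O = s ^+ 2 * (1 - gR / (g1 * gO)) by rewrite hgR1; field; rewrite s0' g1' gO'.
have a2O : edot A2 O = s ^+ 2 * (1 - gR / (g2 * gO)) by rewrite hgR2; field; rewrite s0' g2' gO'.
have a3O : edot A3 O = s ^+ 2 * (1 - gR / (g3 * gO)) by rewrite hgR3; field; rewrite s0' g3' gO'.
have tAO : 1 - edot A O / s ^+ 2 = M * gR / (D * gO).
  rewrite hAdef edotZl !edotDl !edotZl a1O a2O a3O /M /D. field. by rewrite -/D hD gO' s0' g3' g2' g1'.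
have qA : 1 - edot A A / s ^+ 2 = (M ^+ 2 + 2 * K) / D ^+ 2.
  rewrite hAdef edotZl edotZr !edotDl !edotDr !edotZl !edotZr.
  rewrite (edotC A2 A1) (edotC A3 A1) (edotC A3 A2).
  rewrite /K /M h12 h13 h23 a11 a22 a33 /D -/g1 -/g2 -/g3. field. by rewrite -/D hD s0' g3' g2' g1'.
have rpos : 0 < 1 - edot (eminus_add s A1 O) (eminus_add s A1 O) / s ^+ 2.
  by rewrite hrr divr_gt0 ?mulr_gt0 ?q_pos ?exprn_gt0 ?dot_lt.
have gR2 : gR ^+ 2 = (1 - edot (eminus_add s A1 O) (eminus_add s A1 O) / s ^+ 2)^-1.
  by rewrite /gR /Rc enorm2 exprVn sqr_sqrtr ?ltW.
have gR0 : 0 < gR by rewrite /gR invr_gt0 sqrtr_gt0 /Rc enorm2.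
have hRc : Rc = Num.sqrt (edot (eminus_add s A1 O) (eminus_add s A1 O)) by [].
have Rc2 : Rc ^+ 2 = edot (eminus_add s A1 O) (eminus_add s A1 O) := enorm2 _.
have rr0 : edot (eminus_add s A1 O) (eminus_add s A1 O) != 0 by rewrite -Rc2 expf_neq0.
have hrr' : edot (eminus_add s A1 O) (eminus_add s A1 O) = s ^+ 2 * (1 - gR ^-2).
  rewrite gR2 invrK. field. by [].
have Edd : edot (eminus_add s A O) (eminus_add s A O) =
    s ^+ 2 * (1 - (1 - edot A A / s ^+ 2) * (1 - edot O O / s ^+ 2) / (1 - edot A O / s ^+ 2) ^+ 2).
  rewrite -hdd. field. by [].
rewrite Rc2 gR2 {1}hRc mulrC -sqrtrM ?edot_ge0 //. congr Num.sqrt.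
move: rr0; rewrite Edd qA tAO aOO hrr' => rr0.
rewrite -/gO. have M0 : M != 0 := hM. have gR' : gR != 0 by rewrite gt_eqF.
clearbody K M D gR gO. have e1 : gR ^+ 2 - (gR ^+ 2 - 1) = 1 by ring.
have e2 : gR ^+ 2 - 1 = gR ^+ 2 * (1 - gR ^- 2) by field.
have q0 : 1 - gR ^- 2 != 0 by move: rr0; rewrite mulf_eq0 negb_or => /andP [].
field. by rewrite e1 e2 oner_eq0 mulf_neq0 ?expf_neq0 // gR' s0' M0 gO' hD.
Qed.
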